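(* For every infinite discrete group $G$, the Bernoulli flow $2^G$ contains a free point whose orbit is dense.
   Context: The Bernoulli flow is $2^G=\{0,1\}^G$ with the product topology and the action $(g\cdot z)(h)=z(hg)$. A point $z$ is free if the map $g\mapsto g\cdot z$ is injective. *)

(* Defs.v *)
From Stdlib Require Import List.
Import ListNotations.

(* A group: carrier with multiplication, identity and inverse satisfying
   the group axioms. "Discrete" imposes nothing further. *)
Record Group := {
  carrier :> Type;
  gmul : carrier -> carrier -> carrier;
  gone : carrier;
  ginv : carrier -> carrier;
  gmul_assoc : forall a b c, gmul a (gmul b c) = gmul (gmul a b) c;
  gmul_1l : forall a, gmul gone a = a;
  gmul_1r : forall a, gmul a gone = a;
  gmul_Vl : forall a, gmul (ginv a) a = gone;
  gmul_Vr : forall a, gmul a (ginv a) = gone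
}.

Definition infinite_group (G : Group) : Prop :=
  ~ exists l : list G, forall g : G, In g l.

Definition bern (G : Group) := G -> bool.

Definition bact (G : Group) (g : G) (z : bern G) : bern G :=
  fun h => z (gmul G h g).

Definition free_point (G : Group) (z : bern G) : Prop :=
  forall g1 g2 : G, bact G g1 z = bact G g2 z -> g1 = g2.

(* Product topology on {0,1}^G: basic open cylinders around x
   determined by a finite set F of coordinates. *)
Definition cylinder (G : Group) (x : bern G) (F : list G) : bern G -> Prop :=
  fun y => forall h, In h F -> y h = x h.

Definition is_open (G : Group) (U : bern G -> Prop) : Prop :=
  forall x, U x -> exists F : list G, forall y, cylinder G x F y -> U y.

Definition dense_orbit (G : Group) (z : bern G) : Prop :=
  forall U : bern G -> Prop, is_open G U -> (exists x, U x) ->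
    exists g : G, U (bact G g z).

(* Main.v *)
Require Import Defs.
From Stdlib Require Import List.
From Stdlib Require Import Classical ClassicalEpsilon FunctionalExtensionality PropExtensionality ProofIrrelevance Lia Arith Wellfounded.
From Stdlib Require Cantor.
From mathcomp Require eqtype boolp classical_sets wochoice.
Import ListNotations.
Set Bullet Behavior "Strict Subproofs".


Lemma zorn_pre (T:Type) (t0:T) (R:T->T->Prop) :
  (forall t, R t t) -> (forall r s t, R r s -> R s t -> R r t) ->
  (forall A : T -> Prop, (forall s t, A s -> A t -> R s t \/ R t s) ->
     exists t, forall s, A s -> R s t) ->
  exists t, forall s, R t s -> R s t.
Proof.
  intros Hr Ht Hc.
  set (R' := fun s t => boolp.asbool (R s t)).
  assert (E : forall s t, R' s t = true <-> R s t).
  { intros s t. unfold R'. split; intro H.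
    - exact (ssrbool.elimT (boolp.asboolP _) H).
    - exact (boolp.asboolT H). }
  destruct (@classical_sets.ZL_preorder T t0 R') as [t Ht'].
  - intro t. apply E. apply Hr.
  - intros r s t H1 H2. apply E. apply E in H1. apply E in H2. eauto.
  - intros A HA. destruct (Hc A) as [t H].
    + intros s u As Au. destruct (HA s u As Au); [left|right]; apply E; assumption.
    + exists t. intros s As. apply E. auto.
  - exists t. intros s H. apply E. apply Ht'. apply E. exact H.
Qed.

Module WOB.
Import eqtype boolp.
Lemma wo_exists (T:Type) : exists le : T -> T -> Prop,
  (forall P : T -> Prop, (exists x, P x) -> exists z, P z /\ forall x, P x -> le z x) /\
  (forall x y, le x y -> le y x -> x = y).
Proof.
  destruct (@wochoice.well_ordering_principle (boolp.classicType T : eqtype.Equality.type)) as [R HR].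
  assert (Hmin : forall P : T -> Prop, (exists x, P x) -> exists z, P z /\ (forall x, P x -> R z x = true)
     /\ forall z', (P z' /\ forall x, P x -> R z' x = true) -> z = z').
  { intros P [x Px].
    destruct (HR (fun x => boolp.asbool (P x))) as [z [[Hz1 Hz2] U]].
    + exists x. exact (boolp.asboolT Px).
    + exists z. split; [|split].
      * exact (ssrbool.elimT (boolp.asboolP _) Hz1).
      * intros y Py. apply Hz2. exact (boolp.asboolT Py).
      * intros z' [Pz' Hz']. apply U. split. exact (boolp.asboolT Pz').
        intros w Hw. apply Hz'. exact (ssrbool.elimT (boolp.asboolP _) Hw). }
  assert (Hrefl : forall x, R x x = true).
  { intro x. destruct (Hmin (fun w => w = x)) as [z [Hz [Hl _]]]. exists x; auto.
    subst z. apply Hl. reflexivity. }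
  exists (fun x y => R x y = true). split.
  - intros P HP. destruct (Hmin P HP) as [z [Hz [Hl _]]]. exists z. auto.
  - intros x y H1 H2.
    destruct (Hmin (fun w => w = x \/ w = y)) as [z [Hz [Hl U]]]. exists x; auto.
    assert (Ex : z = x). { apply U. split. auto. intros w [-> | ->]; auto. }
    assert (Ey : z = y). { apply U. split. auto. intros w [-> | ->]; auto. }
    congruence.
Qed.
End WOB.


Definition injf {A B : Type} (f : A -> B) := forall x y, f x = f y -> x = y.
Definition cle (A B : Type) := exists f : A -> B, injf f.
Arguments cle (A B)%_type_scope.
Definition infty (X : Type) := exists e : nat -> X, injf e.

Lemma cle_refl A : cle A A.
Proof. exists (fun x => x). intros x y H; exact H. Qed.

Lemma cle_trans A B C : cle A B -> cle B C -> cle A C.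
Proof. intros [f Hf] [g Hg]. exists (fun x => g (f x)). intros x y H. auto. Qed.

Lemma cle_prod A A' B B' : cle A A' -> cle B B' -> cle (A*B) (A'*B').
Proof.
  intros [f Hf] [g Hg]. exists (fun p => (f (fst p), g (snd p))).
  intros [a b] [c d] H. simpl in H. injection H as H1 H2.
  apply Hf in H1. apply Hg in H2. subst. reflexivity.
Qed.

Lemma infty_cle X Y : infty X -> cle X Y -> infty Y.
Proof. intros [e He] [f Hf]. exists (fun n => f (e n)). intros x y H; auto. Qed.

Section FinInf.
Variable X : Type.
Hypothesis x0 : X.
Definition pick (l : list X) : X := epsilon (inhabits x0) (fun x => ~ In x l).
Fixpoint build (n : nat) : list X :=
  match n with 0 => [] | S n => pick (build n) :: build n end.
Lemma build_in k n : k < n -> In (pick (build k)) (build n).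
Proof.
  induction n; intro H. lia. simpl.
  destruct (Nat.eq_dec k n). subst. left; reflexivity. right. apply IHn. lia.
Qed.
End FinInf.

Lemma fin_or_inf (X : Type) : (exists l : list X, forall x, In x l) \/ infty X.
Proof.
  destruct (classic (exists l : list X, forall x, In x l)) as [H|H]; [left; exact H|right].
  destruct (classic (inhabited X)) as [[x0]|Hn].
  2:{ exfalso. apply H. exists []. intro x. apply Hn. constructor; exact x. }
  assert (Hp : forall l, ~ In (pick X x0 l) l).
  { intro l. unfold pick. apply (epsilon_spec (inhabits x0) (fun x => ~ In x l)).
    apply not_all_ex_not. intro Hall. apply H. exists l. intro x. apply Hall. }
  exists (fun n => pick X x0 (build X x0 n)). intros m n Hmn.
  destruct (Nat.lt_trichotomy m n) as [Hl|[Hl|Hl]]; auto.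
  - exfalso. apply (Hp (build X x0 n)). rewrite <- Hmn. apply build_in; auto.
  - exfalso. apply (Hp (build X x0 m)). rewrite Hmn. apply build_in; auto.
Qed.

Record pinj (A B : Type) := { pD : A -> Prop; pf : A -> B;
  pinjP : forall x y, pD x -> pD y -> pf x = pf y -> x = y }.

Lemma comparable (A B : Type) : cle A B \/ cle B A.
Proof.
  destruct (classic (inhabited A)) as [[a0]|HA].
  2:{ left. exists (fun a => False_rect B (HA (inhabits a))). intros x. exfalso; apply HA; constructor; exact x. }
  destruct (classic (inhabited B)) as [[b0]|HB].
  2:{ right. exists (fun b => False_rect A (HB (inhabits b))). intros x. exfalso; apply HB; constructor; exact x. }
  set (R := fun (o o' : pinj A B) => (forall x, pD _ _ o x -> pD _ _ o' x) /\ (forall x, pD _ _ o x -> pf _ _ o' x = pf _ _ o x)).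
  assert (t0 : pinj A B).
  { refine {| pD := fun _ => False; pf := fun _ => b0 |}. intros x y []. }
  destruct (zorn_pre _ t0 R) as [m Hm].
  - intro o. split; auto.
  - intros r s t [H1 H2] [H3 H4]. split; auto. intros x Hx. rewrite H4; auto.
  - intros C HC.
    set (D := fun x => exists o, C o /\ pD _ _ o x).
    set (f := fun x => epsilon (inhabits b0) (fun y => exists o, C o /\ pD _ _ o x /\ pf _ _ o x = y)).
    assert (Hf : forall o x, C o -> pD _ _ o x -> f x = pf _ _ o x).
    { intros o x Co Dx. unfold f.
      destruct (epsilon_spec (inhabits b0) (fun y => exists o, C o /\ pD _ _ o x /\ pf _ _ o x = y)) as [o' [Co' [Dx' E]]].
      { exists (pf _ _ o x), o. auto. }
      rewrite <- E. destruct (HC o o' Co Co') as [[_ H]|[_ H]]; auto. symmetry; auto. }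
    assert (Hi : forall x y, D x -> D y -> f x = f y -> x = y).
    { intros x y [o1 [C1 D1]] [o2 [C2 D2]] E.
      destruct (HC o1 o2 C1 C2) as [[H1 H2]|[H1 H2]].
      - rewrite (Hf o2 x C2 (H1 _ D1)), (Hf o2 y C2 D2) in E. apply (pinjP _ _ o2); auto.
      - rewrite (Hf o1 x C1 D1), (Hf o1 y C1 (H1 _ D2)) in E. apply (pinjP _ _ o1); auto. }
    exists {| pD := D; pf := f; pinjP := Hi |}. intros o Co. split; simpl.
    + intros x Dx. exists o; auto.
    + intros x Dx. apply Hf; auto.
  - destruct (classic (forall x, pD _ _ m x)) as [Hall|Hn].
    { left. exists (pf _ _ m). intros x y. apply pinjP; auto. }
    destruct (classic (forall y, exists x, pD _ _ m x /\ pf _ _ m x = y)) as [Hs|Hs].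
    { right. exists (fun y => epsilon (inhabits a0) (fun x => pD _ _ m x /\ pf _ _ m x = y)).
      intros y1 y2 E.
      destruct (epsilon_spec (inhabits a0) (fun x => pD _ _ m x /\ pf _ _ m x = y1) (Hs y1)) as [_ E1].
      destruct (epsilon_spec (inhabits a0) (fun x => pD _ _ m x /\ pf _ _ m x = y2) (Hs y2)) as [_ E2].
      rewrite <- E1, <- E2, E. reflexivity. }
    exfalso.
    apply not_all_ex_not in Hn. destruct Hn as [x0 Hx0].
    apply not_all_ex_not in Hs. destruct Hs as [y0 Hy0].
    set (D' := fun x => pD _ _ m x \/ x = x0).
    set (f' := fun x => if excluded_middle_informative (x = x0) then y0 else pf _ _ m x).
    assert (Hi : forall x y, D' x -> D' y -> f' x = f' y -> x = y).
    { unfold D', f'. intros x y Hx Hy E.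
      destruct (excluded_middle_informative (x = x0)); destruct (excluded_middle_informative (y = x0)); try congruence.
      - exfalso. destruct Hy as [Hy|Hy]; [|contradiction]. apply Hy0. exists y; auto.
      - exfalso. destruct Hx as [Hx|Hx]; [|contradiction]. apply Hy0. exists x; auto.
      - destruct Hx as [Hx|Hx]; [|contradiction]. destruct Hy as [Hy|Hy]; [|contradiction].
        apply (pinjP _ _ m); auto. }
    set (m' := {| pD := D'; pf := f'; pinjP := Hi |}).
    destruct (Hm m') as [H1 _].
    + split; simpl. intros x Hx; left; exact Hx.
      intros x Hx. unfold f'. destruct (excluded_middle_informative (x = x0)); auto. subst; contradiction.
    + apply Hx0. apply H1. simpl. right. reflexivity.
Qed.


Lemma sig_eq {T : Type} {P : T -> Prop} (u v : sig P) : proj1_sig u = proj1_sig v -> u = v.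
Proof. destruct u, v; simpl; intros ->; f_equal; apply proof_irrelevance. Qed.

Section Square.
Variable X : Type.
Variable e : nat -> X.
Hypothesis He : injf e.

Record sq := { sA : X -> Prop; sf : X -> X -> X;
  sA0 : forall n, sA (e n);
  sclos : forall a b, sA a -> sA b -> sA (sf a b);
  sinj : forall a b c d, sA a -> sA b -> sA c -> sA d -> sf a b = sf c d -> a = c /\ b = d }.

Definition sR (o o' : sq) := (forall x, sA o x -> sA o' x) /\
  (forall a b, sA o a -> sA o b -> sf o' a b = sf o a b).

Lemma sq_start : sq.
Proof.
  set (inv := fun a => epsilon (inhabits 0) (fun n => e n = a)).
  assert (Hinv : forall n, inv (e n) = n).
  { intro n. unfold inv. apply He. apply (epsilon_spec (inhabits 0) (fun m => e m = e n)). exists n; auto. }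
  refine {| sA := fun x => exists n, e n = x; sf := fun a b => e (Cantor.to_nat (inv a, inv b)) |}.
  - intro n; exists n; auto.
  - intros a b _ _. eexists; reflexivity.
  - intros a b c d [n1 <-] [n2 <-] [n3 <-] [n4 <-] E. apply He in E. apply Cantor.to_nat_inj in E.
    rewrite !Hinv in E. injection E as -> ->. auto.
Qed.

Lemma sq_max : exists m, forall o, sR m o -> sR o m.
Proof.
  apply (zorn_pre _ sq_start).
  - intro o; split; auto.
  - intros r s t [H1 H2] [H3 H4]. split; auto. intros a b Ha Hb. rewrite H4; auto.
  - intros C HC.
    destruct (classic (exists o, C o)) as [[o0 Co0]|Hne].
    2:{ exists sq_start. intros s Cs. exfalso; apply Hne; eauto. }
    set (D := fun x => exists o, C o /\ sA o x).
    set (f := fun a b => epsilon (inhabits (e 0)) (fun y => exists o, C o /\ sA o a /\ sA o b /\ sf o a b = y)).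
    assert (Hf : forall o a b, C o -> sA o a -> sA o b -> f a b = sf o a b).
    { intros o a b Co Da Db. unfold f.
      destruct (epsilon_spec (inhabits (e 0)) (fun y => exists o, C o /\ sA o a /\ sA o b /\ sf o a b = y)) as [o' [Co' [Da' [Db' E]]]].
      { exists (sf o a b), o. auto. }
      rewrite <- E. destruct (HC o o' Co Co') as [[_ H]|[_ H]]; auto. symmetry; auto. }
    assert (Hcom : forall a b, D a -> D b -> exists o, C o /\ sA o a /\ sA o b).
    { intros a b [o1 [C1 D1]] [o2 [C2 D2]]. destruct (HC o1 o2 C1 C2) as [[H1 _]|[H1 _]].
      exists o2; auto. exists o1; auto. }
    assert (H0 : forall n, D (e n)). { intro n. exists o0. split; auto. apply sA0. }
    assert (Hc : forall a b, D a -> D b -> D (f a b)).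
    { intros a b Da Db. destruct (Hcom a b Da Db) as [o [Co [Ha Hb]]]. rewrite (Hf o a b Co Ha Hb).
      exists o. split; auto. apply sclos; auto. }
    assert (Hi : forall a b c d, D a -> D b -> D c -> D d -> f a b = f c d -> a = c /\ b = d).
    { intros a b c d Da Db Dc Dd E.
      destruct (Hcom a b Da Db) as [o1 [C1 [H1a H1b]]].
      destruct (Hcom c d Dc Dd) as [o2 [C2 [H2c H2d]]].
      rewrite (Hf o1 a b C1 H1a H1b), (Hf o2 c d C2 H2c H2d) in E.
      destruct (HC o1 o2 C1 C2) as [[S1 S2]|[S1 S2]].
      - rewrite <- (S2 a b H1a H1b) in E. apply (sinj o2); auto.
      - rewrite <- (S2 c d H2c H2d) in E. apply (sinj o1); auto. }
    exists {| sA := D; sf := f; sA0 := H0; sclos := Hc; sinj := Hi |}.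
    intros o Co. split; simpl.
    + intros x Dx. exists o; auto.
    + intros a b Ha Hb. apply Hf; auto.
Qed.

Lemma square : cle (X * X) X.
Proof.
  destruct sq_max as [m Hm].
  set (A := sA m). set (f := sf m).
  assert (e01 : e 0 <> e 1). { intro E. apply He in E. discriminate. }
  destruct (comparable {x | ~ A x} {x | A x}) as [[k Hk]|[k Hk]].
  -
    set (h := fun x => match excluded_middle_informative (A x) with
                       | left _ => f x (e 0)
                       | right H => f (proj1_sig (k (exist _ x H))) (e 1) end).
    assert (HhA : forall x, A (h x)).
    { intro x. unfold h. destruct (excluded_middle_informative (A x)).
      apply sclos; auto. apply sA0. apply sclos. apply (proj2_sig (k _)). apply sA0. }
    assert (Hh : injf h).
    { intros x y. unfold h.
      destruct (excluded_middle_informative (A x)) as [Ax|Ax];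
      destruct (excluded_middle_informative (A y)) as [Ay|Ay]; intro E.
      - apply sinj in E; auto; try apply sA0. tauto.
      - apply sinj in E; auto; try apply sA0; try apply (proj2_sig (k _)). destruct E as [_ E]. contradiction.
      - apply sinj in E; auto; try apply sA0; try apply (proj2_sig (k _)). destruct E as [_ E]. symmetry in E. contradiction.
      - apply sinj in E; auto; try apply sA0; try apply (proj2_sig (k _)). destruct E as [E _].
        apply sig_eq in E. apply Hk in E. injection E. auto. }
    exists (fun p => f (h (fst p)) (h (snd p))). intros [a b] [c d] E. simpl in E.
    apply sinj in E; try apply HhA. destruct E as [E1 E2]. apply Hh in E1. apply Hh in E2. subst; auto.
  - exfalso.
    set (kk := fun x => match excluded_middle_informative (A x) with
                        | left H => proj1_sig (k (exist _ x H)) | right _ => x end).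
    assert (Hk1 : forall a, A a -> ~ A (kk a)).
    { intros a Ha. unfold kk. destruct (excluded_middle_informative (A a)); [|contradiction].
      apply (proj2_sig (k _)). }
    assert (Hk2 : forall a b, A a -> A b -> kk a = kk b -> a = b).
    { intros a b Ha Hb. unfold kk.
      destruct (excluded_middle_informative (A a)); [|contradiction].
      destruct (excluded_middle_informative (A b)); [|contradiction].
      intro E. apply sig_eq in E. apply Hk in E. injection E; auto. }
    set (B := fun x => exists a, A a /\ kk a = x).
    set (A' := fun x => A x \/ B x).
    set (tag := fun u => if excluded_middle_informative (A u) then 0 else 1).
    set (base := fun u => if excluded_middle_informative (A u) then u
                          else epsilon (inhabits (e 0)) (fun a => A a /\ kk a = u)).
    assert (Hbase : forall u, A' u -> A (base u) /\ ((tag u = 0 /\ base u = u) \/ (tag u = 1 /\ kk (base u) = u))).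
    { intros u Hu. unfold base, tag. destruct (excluded_middle_informative (A u)) as [Au|Au].
      - auto.
      - destruct Hu as [Hu|Hu]; [contradiction|].
        destruct (epsilon_spec (inhabits (e 0)) (fun a => A a /\ kk a = u) Hu) as [H1 H2]. auto. }
    assert (Htag : forall u, tag u <= 1). { intro u. unfold tag. destruct (excluded_middle_informative (A u)); lia. }
    assert (Hdet : forall u v, A' u -> A' v -> tag u = tag v -> base u = base v -> u = v).
    { intros u v Hu Hv E1 E2. destruct (Hbase u Hu) as [_ [[T1 B1]|[T1 B1]]];
      destruct (Hbase v Hv) as [_ [[T2 B2]|[T2 B2]]]; try congruence. }
    set (enc := fun a b => f (f (e (2 * tag a + tag b)) (base a)) (base b)).
    assert (HencA : forall a b, A' a -> A' b -> A (enc a b)).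
    { intros a b Ha Hb. unfold enc. apply sclos. apply sclos. apply sA0.
      apply Hbase; auto. apply Hbase; auto. }
    set (f' := fun a b => if excluded_middle_informative (A a /\ A b) then f a b else kk (enc a b)).
    assert (H0 : forall n, A' (e n)). { intro n. left. apply sA0. }
    assert (Hc : forall a b, A' a -> A' b -> A' (f' a b)).
    { intros a b Ha Hb. unfold f'. destruct (excluded_middle_informative (A a /\ A b)) as [[Ha' Hb']|H].
      - left. apply sclos; auto.
      - right. exists (enc a b). split; auto. }
    assert (Hi : forall a b c d, A' a -> A' b -> A' c -> A' d -> f' a b = f' c d -> a = c /\ b = d).
    { intros a b c d Ha Hb Hc' Hd. unfold f'.
      destruct (excluded_middle_informative (A a /\ A b)) as [[Ha' Hb']|H1];
      destruct (excluded_middle_informative (A c /\ A d)) as [[Hc'' Hd']|H2]; intro E.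
      - apply sinj in E; auto.
      - exfalso. apply (Hk1 (enc c d)). apply HencA; auto. rewrite <- E. apply sclos; auto.
      - exfalso. apply (Hk1 (enc a b)). apply HencA; auto. rewrite E. apply sclos; auto.
      - apply Hk2 in E; try apply HencA; auto. unfold enc in E.
        apply sinj in E. destruct E as [E E4]. apply sinj in E. destruct E as [E E3].
        apply He in E. assert (Ta := Htag a). assert (Tb := Htag b). assert (Tc := Htag c). assert (Td := Htag d).
        assert (tag a = tag c) by lia. assert (tag b = tag d) by lia.
        split; apply Hdet; auto.
        all: try apply sA0; try apply sclos; try apply sA0; try apply Hbase; auto. }
    set (m' := {| sA := A'; sf := f'; sA0 := H0; sclos := Hc; sinj := Hi |}).
    destruct (Hm m') as [S1 _].
    + split; simpl. intros x Hx; left; exact Hx.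
      intros a b Ha Hb. unfold f'. destruct (excluded_middle_informative (A a /\ A b)); tauto.
    + apply (Hk1 (e 0)). apply sA0. apply S1. simpl. right. exists (e 0). split; auto. apply sA0.
Qed.
End Square.


Lemma sq_inf X : infty X -> cle (X * X) X.
Proof. intros [e He]. exact (square X e He). Qed.

Lemma natprod_inf X : infty X -> cle (nat * X) X.
Proof. intros H. apply cle_trans with (X * X)%type. apply cle_prod. exact H. apply cle_refl. apply sq_inf; auto. Qed.

Lemma list_inf X : infty X -> cle (list X) X.
Proof.
  intros Hi. destruct (sq_inf X Hi) as [p Hp]. destruct Hi as [e He].
  set (fold := fix fold (l : list X) : X := match l with [] => e 0 | a :: l => p (a, fold l) end).
  apply cle_trans with (nat * X)%type. 2: apply natprod_inf; exists e; auto.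
  exists (fun l => (length l, fold l)). intros l1. induction l1 as [|a l1 IH]; intros [|b l2] E; simpl in E; try discriminate.
  - reflexivity.
  - injection E as E1 E2. apply Hp in E2. injection E2 as -> E2. f_equal. apply IH. simpl. congruence.
Qed.

Lemma list_mono A B : cle A B -> cle (list A) (list B).
Proof.
  intros [f Hf]. exists (map f). intros l1. induction l1 as [|a l1 IH]; intros [|b l2] E; simpl in E; try discriminate.
  reflexivity. injection E as E1 E2. apply Hf in E1. subst. f_equal. auto.
Qed.

Lemma sum_inf A B X : infty X -> cle A X -> cle B X -> cle (A + B) X.
Proof.
  intros Hi [fa Ha] [fb Hb]. destruct (sq_inf X Hi) as [p Hp]. destruct Hi as [e He].
  exists (fun s => match s with inl a => p (e 0, fa a) | inr b => p (e 1, fb b) end).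
  intros [a|b] [a'|b'] E; apply Hp in E; assert (E1 := f_equal fst E); assert (E2 := f_equal snd E);
    simpl in E1, E2; try (apply He in E1; discriminate).
  - f_equal; auto.
  - f_equal; auto.
Qed.

Lemma boolprod_inf X : infty X -> cle (X * bool) X.
Proof.
  intros Hi. apply cle_trans with (X * X)%type. apply cle_prod. apply cle_refl.
  destruct Hi as [e He]. exists (fun b : bool => if b then e 0 else e 1).
  intros [|] [|] E; auto; apply He in E; discriminate.
  apply sq_inf; auto.
Qed.

Definition small (G : Type) (lt : G -> G -> Prop) (x : G) := ~ cle G {y | lt y x}.

Lemma initial_wo (G : Type) : exists lt : G -> G -> Prop,
  well_founded lt /\ (forall x y, x <> y -> lt x y \/ lt y x) /\ (forall x, small G lt x).
Proof.
  destruct (WOB.wo_exists G) as [le [Hmin Hanti]].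
  set (lt := fun x y => le x y /\ x <> y).
  assert (Hrefl : forall x, le x x).
  { intro x. destruct (Hmin (fun w => w = x)) as [z [-> Hz]]. eauto. auto. }
  assert (Htot : forall x y, x <> y -> lt x y \/ lt y x).
  { intros x y Hxy. destruct (Hmin (fun w => w = x \/ w = y)) as [z [[->| ->] Hz]]. eauto.
    left. split; auto. right. split; auto. }
  assert (Hwf : well_founded lt).
  { intro a. apply NNPP. intro Hna.
    destruct (Hmin (fun x => ~ Acc lt x)) as [z [Hz Hl]]. eauto.
    apply Hz. constructor. intros y [Hyz Hne]. apply NNPP. intro Hy.
    apply Hne. apply Hanti; auto. }
  destruct (classic (exists a, cle G {y | lt y a})) as [Hex|Hno].
  - destruct (Hmin (fun a => cle G {y | lt y a}) Hex) as [a0 [[j Hj] Ha0]].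
    exists (fun x y => lt (proj1_sig (j x)) (proj1_sig (j y))). split; [|split].
    + apply (wf_inverse_image G G lt (fun x => proj1_sig (j x))). exact Hwf.
    + intros x y Hxy. apply Htot. intro E. apply Hxy. apply Hj. apply sig_eq. exact E.
    + intros x Hc. unfold small in Hc.
      assert (Hc' : cle G {y | lt y (proj1_sig (j x))}).
      { apply cle_trans with (1 := Hc).
        exists (fun y => exist (fun w => lt w (proj1_sig (j x))) (proj1_sig (j (proj1_sig y))) (proj2_sig y)).
        intros [y1 H1] [y2 H2] E. injection E as E. apply sig_eq in E. apply Hj in E. apply sig_eq. exact E. }
      destruct (proj2_sig (j x)) as [Hle Hne].
      apply Hne. apply Hanti; auto.
  - exists lt. split; [|split]; auto.
    intros x Hc. apply Hno. exists x. exact Hc.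
Qed.


Section Main.
Variable G : Group.
Hypothesis HG : infinite_group G.

Lemma lcancel a b c : gmul G a b = gmul G a c -> b = c.
Proof.
  intro E. rewrite <- (gmul_1l G b), <- (gmul_1l G c), <- (gmul_Vl G a), <- !gmul_assoc, E. reflexivity.
Qed.
Lemma rcancel a b c : gmul G b a = gmul G c a -> b = c.
Proof.
  intro E. rewrite <- (gmul_1r G b), <- (gmul_1r G c), <- (gmul_Vr G a), !gmul_assoc, E. reflexivity.
Qed.

Lemma G_infty : infty G.
Proof. destruct (fin_or_inf G) as [H|H]; auto. contradiction. Qed.

Definition Req := (list (G * bool) + G)%type.

Lemma Req_le : cle Req G.
Proof.
  apply sum_inf. apply G_infty.
  - apply cle_trans with (list G). apply list_mono. apply boolprod_inf. apply G_infty.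
    apply list_inf. apply G_infty.
  - apply cle_refl.
Qed.

Definition Blk := ((G -> G) * bool)%type.
Definition dB : Blk := (fun g => g, false).
Definition block (r : Req) : list Blk :=
  match r with
  | inl l => map (fun fv => (fun g => gmul G (fst fv) g, snd fv)) l
  | inr s => if excluded_middle_informative (s = gone G) then []
             else [(fun g => g, true); (fun g => gmul G g s, false)]
  end.

Lemma block_inj_in r b : In b (block r) -> injf (fst b).
Proof.
  intro H. destruct r as [l|s]; simpl in H.
  - apply in_map_iff in H. destruct H as [[f v] [<- _]]. simpl. intros x y. apply lcancel.
  - destruct (excluded_middle_informative (s = gone G)). destruct H.
    destruct H as [<-|[<-|[]]]; simpl. intros x y; auto. intros x y. apply rcancel.
Qed.

Lemma block_inj r i : injf (fst (nth i (block r) dB)).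
Proof.
  destruct (nth_in_or_default i (block r) dB) as [H|H].
  - exact (block_inj_in r _ H).
  - rewrite H. intros x y; auto.
Qed.

Variable e : Req -> G.
Hypothesis He : injf e.
Definition rho (x : G) : Req := epsilon (inhabits (inr (gone G))) (fun r => e r = x).
Lemma rho_e r : rho (e r) = r.
Proof. unfold rho. apply He. apply (epsilon_spec (inhabits (inr (gone G))) (fun r' => e r' = e r)). eauto. Qed.

Variable lt : G -> G -> Prop.
Hypothesis Hwf : well_founded lt.
Hypothesis Htot : forall x y, x <> y -> lt x y \/ lt y x.
Hypothesis Hsmall : forall x, small G lt x.

Definition c (x : G) (i : nat) := fst (nth i (block (rho x)) dB).
Definition len (x : G) := length (block (rho x)).

Lemma exist_step x (h : G -> G) : exists g, forall y, lt y x -> forall i j, i < len x -> j < len y ->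
  c x i g <> c y j (h y).
Proof.
  apply NNPP. intro Hn.
  assert (Hbad : forall g, exists y i j, lt y x /\ i < len x /\ j < len y /\ c x i g = c y j (h y)).
  { intro g. apply NNPP. intro H. apply Hn. exists g. intros y Hy i j Hi Hj E. apply H. exists y, i, j. auto. }
  destruct (fin_or_inf {y | lt y x}) as [[L HL]|Hinf].
  - set (inv := fun i w => epsilon (inhabits (gone G)) (fun g' => c x i g' = w)).
    apply HG. exists (flat_map (fun i => flat_map (fun yy => map (fun j => inv i (c (proj1_sig yy) j (h (proj1_sig yy))))
         (seq 0 (len (proj1_sig yy)))) L) (seq 0 (len x))).
    intro g. destruct (Hbad g) as [y [i [j [Hy [Hi [Hj E]]]]]].
    apply in_flat_map. exists i. split. apply in_seq. lia.
    apply in_flat_map. exists (exist _ y Hy). split. apply HL.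
    apply in_map_iff. exists j. split. 2:{ apply in_seq. simpl. lia. }
    simpl. apply (block_inj (rho x) i). fold (c x i). rewrite E. unfold inv.
    apply (epsilon_spec (inhabits (gone G)) (fun g' => c x i g' = c y j (h y))). eauto.
  - destruct Hinf as [en Hen].
    set (P := fun g (t : nat * ({y | lt y x} * nat)) => fst t < len x /\ snd (snd t) < len (proj1_sig (fst (snd t))) /\
              c x (fst t) g = c (proj1_sig (fst (snd t))) (snd (snd t)) (h (proj1_sig (fst (snd t))))).
    set (m := fun g => epsilon (inhabits (0, (en 0, 0))) (P g)).
    assert (Hm : forall g, P g (m g)).
    { intro g. apply epsilon_spec. destruct (Hbad g) as [y [i [j [Hy [Hi [Hj E]]]]]].
      exists (i, (exist _ y Hy, j)). unfold P; simpl. auto. }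
    apply (Hsmall x). unfold small.
    apply cle_trans with (nat * ({y | lt y x} * nat))%type.
    + exists m. intros g1 g2 E. destruct (Hm g1) as [_ [_ E1]]. destruct (Hm g2) as [_ [_ E2]].
      rewrite E in E1. rewrite <- E2 in E1. apply (block_inj (rho x) (fst (m g2))). exact E1.
    + assert (Hi : infty {y | lt y x}) by (exists en; auto).
      apply cle_trans with (nat * {y | lt y x})%type.
      * apply cle_prod. apply cle_refl.
        apply cle_trans with ({y | lt y x} * {y | lt y x})%type.
        apply cle_prod. apply cle_refl. exact Hi. apply sq_inf. exact Hi.
      * apply natprod_inf. exact Hi.
Qed.

Definition cond x (prev : forall y, lt y x -> G) (g : G) :=
  forall y (H : lt y x) i j, i < len x -> j < len y -> c x i g <> c y j (prev y H).
Definition Fstep x (prev : forall y, lt y x -> G) : G := epsilon (inhabits (gone G)) (cond x prev).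
Definition gf := Fix Hwf (fun _ => G) Fstep.

Lemma gf_eq x : gf x = Fstep x (fun y _ => gf y).
Proof.
  unfold gf. apply (Fix_eq Hwf (fun _ => G) Fstep). intros x0 f1 f2 Hf.
  assert (E : f1 = f2).
  { apply functional_extensionality_dep; intro y; apply functional_extensionality_dep; intro p. apply Hf. }
  rewrite E. reflexivity.
Qed.

Lemma gf_good x y : lt y x -> forall i j, i < len x -> j < len y -> c x i (gf x) <> c y j (gf y).
Proof.
  intros Hy i j Hi Hj. rewrite (gf_eq x). unfold Fstep.
  assert (Hc : cond x (fun y _ => gf y) (epsilon (inhabits (gone G)) (cond x (fun y _ => gf y)))).
  { apply epsilon_spec. destruct (exist_step x gf) as [g Hg]. exists g. intros y' H' i' j'. apply Hg. auto. }
  exact (Hc y Hy i j Hi Hj).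
Qed.

Definition zz (w : G) : bool :=
  if excluded_middle_informative (exists x i, i < len x /\ c x i (gf x) = w /\ snd (nth i (block (rho x)) dB) = true)
  then true else false.

Definition consistent (b : list Blk) := forall i j g, i < length b -> j < length b ->
  fst (nth i b dB) g = fst (nth j b dB) g -> snd (nth i b dB) = snd (nth j b dB).

Lemma realize x : consistent (block (rho x)) -> forall i, i < len x ->
  zz (c x i (gf x)) = snd (nth i (block (rho x)) dB).
Proof.
  intros Hc i Hi. unfold zz.
  destruct (excluded_middle_informative (exists x' i', i' < len x' /\ c x' i' (gf x') = c x i (gf x) /\
     snd (nth i' (block (rho x')) dB) = true)) as [[x' [i' [Hi' [E V]]]]|Hn].
  - destruct (classic (x' = x)) as [->|Hne].
    + rewrite <- V. symmetry. apply (Hc i i' (gf x) Hi Hi'). symmetry. exact E.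
    + exfalso. destruct (Htot x' x Hne) as [H|H].
      * apply (gf_good x x' H i i' Hi Hi'). auto.
      * apply (gf_good x' x H i' i Hi' Hi). auto.
  - destruct (snd (nth i (block (rho x)) dB)) eqn:V; auto.
    exfalso. apply Hn. exists x, i. auto.
Qed.
End Main.

Theorem lemma2p3 (G : Group) (HG : infinite_group G) :
  exists z : bern G, free_point G z /\ dense_orbit G z.
Proof.
  destruct (Req_le G HG) as [e He].
  destruct (initial_wo G) as [lt [Hwf [Htot Hsmall]]].
  set (z := zz G e lt Hwf).
  exists z. split.
  - intros g1 g2 Heq. apply NNPP. intro Hne.
    set (s := gmul G (ginv G g1) g2).
    assert (Hs : s <> gone G).
    { intro E. apply Hne. unfold s in E.
      rewrite <- (gmul_1l G g2), <- (gmul_Vr G g1), <- gmul_assoc, E, gmul_1r. reflexivity. }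
    set (x := e (inr s)).
    assert (Hb : block G (rho G e x) = [(fun g => g, true); (fun g => gmul G g s, false)]).
    { unfold x. rewrite rho_e; auto. simpl. destruct (excluded_middle_informative (s = gone G)); [contradiction|reflexivity]. }
    assert (Hcons : consistent G (block G (rho G e x))).
    { rewrite Hb. intros [|[|i]] [|[|j]] g Hi Hj E; simpl in *; try lia; auto; exfalso; apply Hs.
      - apply (lcancel G g). rewrite gmul_1r. auto.
      - apply (lcancel G g). rewrite gmul_1r. auto. }
    assert (H0 := realize G HG e lt Hwf Htot Hsmall x Hcons 0).
    assert (H1 := realize G HG e lt Hwf Htot Hsmall x Hcons 1).
    unfold len, c in H0, H1. rewrite Hb in H0, H1. simpl in H0, H1.
    specialize (H0 ltac:(lia)). specialize (H1 ltac:(lia)).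
    set (k := gf G e lt Hwf x) in *.
    assert (E := f_equal (fun f => f (gmul G k (ginv G g1))) Heq). unfold bact in E. simpl in E.
    rewrite <- !gmul_assoc, gmul_Vl, gmul_1r in E. fold s in E.
    fold z in H0, H1. congruence.
  - intros U HU [x0 Ux0].
    destruct (HU x0 Ux0) as [F HF].
    set (r := inl (map (fun h => (h, x0 h)) F) : Req G).
    set (x := e r).
    assert (Hb : block G (rho G e x) = map (fun h => (fun g => gmul G h g, x0 h)) F).
    { unfold x. rewrite rho_e; auto. simpl. rewrite map_map. reflexivity. }
    assert (Hnth : forall i, i < length F -> nth i (block G (rho G e x)) (dB G) = (fun g => gmul G (nth i F (gone G)) g, x0 (nth i F (gone G)))).
    { intros i Hi. rewrite Hb. rewrite (nth_indep _ _ ((fun h => (fun g => gmul G h g, x0 h)) (gone G))).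
      exact (map_nth (fun h : G => (fun g : G => gmul G h g, x0 h)) F (gone G) i). rewrite length_map. auto. }
    assert (Hcons : consistent G (block G (rho G e x))).
    { intros i j g Hi Hj E. rewrite Hb, length_map in Hi, Hj. rewrite !Hnth in E |- *; auto.
      simpl in *. apply rcancel in E. rewrite E. reflexivity. }
    exists (gf G e lt Hwf x). apply HF. intros h Hh. unfold bact.
    destruct (In_nth F h (gone G) Hh) as [i [Hi <-]].
    assert (R := realize G HG e lt Hwf Htot Hsmall x Hcons i).
    unfold len, c in R. rewrite Hb, length_map in R. specialize (R Hi). rewrite <- Hb in R.
    rewrite Hnth in R; auto.
Qed.
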